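(* Let $x,y\in(0,1)$ and $n\in\mathbb{N}$. Let $X_1,X_2\sim B(n,x)$ be independent, $Y_1,Y_2\sim B(n,y)$ be independent, and $S_{2n}^*\sim B\bigl(2n,\tfrac{x+y}{2}\bigr)$. Then \[ F_{S_{2n}^*}\leqslant_{\mathrm{cx}}\tfrac12\bigl(F_{X_1+X_2}+F_{Y_1+Y_2}\bigr), \] i.e. $\mathbb{E}\,f(S_{2n}^* )\le \tfrac12\bigl(\mathbb{E}\,f(X_1+X_2)+\mathbb{E}\,f(Y_1+Y_2)\bigr)$ for every convex $f:\mathbb{R}\to\mathbb{R}$.
   Context: $B(n,p)$ denotes the binomial distribution: $P(X=k)=\binom nk p^k(1-p)^{n-k}$, $k=0,\dots,n$. $F_X(t)=P(X<t)$. For distribution functions $G,H$ of probability measures with finite first moment, $G\leqslant_{\mathrm{cx}}H$ means $\int f\,dG\le\int f\,dH$ for all convex $f:\mathbb{R}\to\mathbb{R}$ for which the integrals exist; a convex combination of distribution functions is the distribution function of the corresponding mixture. *)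

(* Defs.v *)
From Stdlib Require Import Reals.
Open Scope R_scope.

Definition binom_pmf (n : nat) (p : R) (k : nat) : R :=
  C n k * p ^ k * (1 - p) ^ (n - k).

Definition E_binom (n : nat) (p : R) (f : R -> R) : R :=
  sum_f_R0 (fun k => binom_pmf n p k * f (INR k)) n.

Definition E_sum_indep_binom (n : nat) (p : R) (f : R -> R) : R :=
  sum_f_R0 (fun i =>
    sum_f_R0 (fun j => binom_pmf n p i * binom_pmf n p j * f (INR i + INR j)) n) n.

Definition convex_fun (f : R -> R) : Prop :=
  forall a b t : R, 0 <= t <= 1 ->
    f (t * a + (1 - t) * b) <= t * f a + (1 - t) * f b.

(* Main.v *)
Require Import Defs.
From Stdlib Require Import Reals.
From Stdlib Require Import Lra Lia.
Open Scope R_scope.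

Definition Op (p : R) (g : R -> R) : R -> R := fun t => (1 - p) * g t + p * g (t + 1).
Definition It (p : R) (m : nat) (g : R -> R) : R -> R := Nat.iter m (Op p) g.

Lemma It_S p m g t : It p (S m) g t = Op p (It p m g) t.
Proof. reflexivity. Qed.

Lemma It_Sr p m g t : It p (S m) g t = It p m (Op p g) t.
Proof. unfold It. now rewrite Nat.iter_succ_r. Qed.

Lemma It_ext p m g1 g2 t : (forall s, g1 s = g2 s) -> It p m g1 t = It p m g2 t.
Proof.
  intros H. revert t. induction m; intro t; simpl.
  - apply H.
  - change (Op p (It p m g1) t = Op p (It p m g2) t). unfold Op.
    now rewrite !IHm.
Qed.

Lemma It_shift p m g t : It p m (fun s => g (s + 1)) t = It p m g (t + 1).
Proof.
  revert t. induction m; intro t; [reflexivity|].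
  rewrite !It_S. unfold Op. now rewrite !IHm.
Qed.

Lemma It_lin p m a b g1 g2 t :
  It p m (fun s => a * g1 s + b * g2 s) t = a * It p m g1 t + b * It p m g2 t.
Proof.
  revert t. induction m; intro t; [reflexivity|].
  rewrite !It_S. unfold Op. rewrite !IHm. ring.
Qed.

Lemma It_lin3 p m a b c g1 g2 g3 t :
  It p m (fun s => a * g1 s + b * g2 s + c * g3 s) t
  = a * It p m g1 t + b * It p m g2 t + c * It p m g3 t.
Proof.
  revert t. induction m; intro t; [reflexivity|].
  rewrite !It_S. unfold Op. rewrite !IHm. ring.
Qed.

Lemma It_pos p m g t : 0 <= p <= 1 -> (forall s, 0 <= g s) -> 0 <= It p m g t.
Proof.
  intros Hp H. revert t. induction m; intro t; [apply H|].
  rewrite It_S. unfold Op.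
  pose proof (IHm t). pose proof (IHm (t+1)). nra.
Qed.

Lemma It_comm q p m g t : It q m (Op p g) t = Op p (It q m g) t.
Proof.
  unfold Op at 1.
  rewrite It_lin. unfold Op. now rewrite It_shift.
Qed.

Definition D2 (g : R -> R) (s : R) := g (s + 1 + 1) - 2 * g (s + 1) + g s.

Lemma Rlem x y m g : 0 <= x <= 1 -> 0 <= y <= 1 -> (forall s, 0 <= D2 g s) -> forall t,
  0 <= It x (S m) g t + It y (S m) g t - Op x (It y m g) t - Op y (It x m g) t.
Proof.
  intros Hx Hy Hg. induction m; intro t.
  - simpl. lra.
  - pose proof (IHm t) as Q0. pose proof (IHm (t+1)) as Q1.
    assert (P : 0 <= It y m (fun s => (x-y)^2 * D2 g s) t).
    { apply It_pos; auto. intro s. apply Rmult_le_pos; [apply pow2_ge_0|apply Hg]. }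
    assert (E : It y m (fun s => (x-y)^2 * D2 g s) t =
              (x-y)^2 * It y m g (t+1+1) + (-2*(x-y)^2) * It y m g (t+1) + (x-y)^2 * It y m g t).
    { rewrite (It_ext _ _ _ (fun s => (x-y)^2 * (fun u => (fun v => g (v+1)) (u+1)) s
                  + (-2*(x-y)^2) * (fun v => g (v+1)) s + (x-y)^2 * g s)).
      - rewrite It_lin3.
        rewrite (It_shift y m (fun v => g (v + 1)) t), !It_shift.
        reflexivity.
      - intro s. unfold D2. ring. }
    rewrite E in P.
    rewrite !It_S in *. unfold Op in *. rewrite !It_S. unfold Op.
    set (A := It x m g) in *. set (B := It y m g) in *.
    pose proof (Rmult_le_pos (1-x) _ ltac:(lra) Q0).
    pose proof (Rmult_le_pos x _ ltac:(lra) Q1). lra.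
Qed.

Lemma Mlem x y m g : 0 <= x <= 1 -> 0 <= y <= 1 -> (forall s, 0 <= D2 g s) -> forall t,
  It ((x+y)/2) m g t <= / 2 * (It x m g t + It y m g t).
Proof.
  intros Hx Hy. revert g. induction m; intros g Hg t.
  - simpl. lra.
  - assert (Hg' : forall s, 0 <= D2 (Op ((x+y)/2) g) s).
    { intro s. assert (E : D2 (Op ((x+y)/2) g) s = (1 - (x+y)/2) * D2 g s + (x+y)/2 * D2 g (s+1))
        by (unfold D2, Op; ring).
      rewrite E. pose proof (Hg s). pose proof (Hg (s+1)).
      pose proof (Rmult_le_pos (1 - (x+y)/2) _ ltac:(lra) H).
      pose proof (Rmult_le_pos ((x+y)/2) _ ltac:(lra) H0). lra. }
    pose proof (IHm _ Hg' t) as IH.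
    assert (Ex : forall p, It p m (Op ((x+y)/2) g) t = /2 * It p m (Op x g) t + /2 * It p m (Op y g) t).
    { intro p. rewrite <- It_lin. apply It_ext. intro s. unfold Op. field. }
    rewrite (Ex x), (Ex y) in IH.
    rewrite (It_comm x y) in IH. rewrite (It_comm y x) in IH.
    pose proof (Rlem x y m g Hx Hy Hg t) as R.
    rewrite !It_Sr in *. lra.
Qed.

Definition q (m : nat) (p : R) (k : nat) : R := if (k <=? m)%nat then binom_pmf m p k else 0.

Lemma C_n0 n : C n 0 = 1.
Proof. unfold C. rewrite Nat.sub_0_r. simpl. field. apply INR_fact_neq_0. Qed.

Lemma C_nn n : C n n = 1.
Proof. unfold C. rewrite Nat.sub_diag. simpl. field. apply INR_fact_neq_0. Qed.

Lemma pmf_rec m p k : (k <= S m)%nat ->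
  binom_pmf (S m) p k = (1-p) * q m p k + p * (match k with 0%nat => 0 | S j => q m p j end).
Proof.
  intros Hk. unfold q. destruct k as [|j].
  - simpl (0 <=? m)%nat. cbv iota. unfold binom_pmf. rewrite !C_n0. rewrite !Nat.sub_0_r. simpl. ring.
  - destruct (Nat.eq_dec j m) as [->|Hj].
    + rewrite (proj2 (Nat.leb_le m m)) by lia.
      rewrite (proj2 (Nat.leb_gt (S m) m)) by lia.
      unfold binom_pmf. rewrite !C_nn, !Nat.sub_diag. simpl. ring.
    + rewrite (proj2 (Nat.leb_le (S j) m)) by lia.
      rewrite (proj2 (Nat.leb_le j m)) by lia.
      unfold binom_pmf. rewrite <- pascal by lia.
      replace (S m - S j)%nat with (m - j)%nat by lia.
      replace (m - j)%nat with (S (m - S j)) by lia. simpl. ring.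
Qed.

Lemma sum_q m p (h : nat -> R) d :
  sum_f_R0 (fun k => q m p k * h k) (m + d) = sum_f_R0 (fun k => binom_pmf m p k * h k) m.
Proof.
  induction d.
  - rewrite Nat.add_0_r. apply sum_eq. intros i Hi. unfold q.
    rewrite (proj2 (Nat.leb_le i m)) by lia. reflexivity.
  - rewrite Nat.add_succ_r, tech5, IHd. unfold q.
    rewrite (proj2 (Nat.leb_gt (S (m + d)) m)) by lia. ring.
Qed.

Lemma PS m p (h : nat -> R) :
  sum_f_R0 (fun k => binom_pmf (S m) p k * h k) (S m)
  = (1-p) * sum_f_R0 (fun k => binom_pmf m p k * h k) m
    + p * sum_f_R0 (fun k => binom_pmf m p k * h (S k)) m.
Proof.
  rewrite (sum_eq _ (fun k => (q m p k * h k) * (1-p) +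
      ((match k with 0%nat => 0 | S j => q m p j end) * h k) * p)).
  2: { intros i Hi. rewrite pmf_rec by exact Hi. ring. }
  rewrite sum_plus, <- !scal_sum.
  replace (S m) with (m + 1)%nat by lia. rewrite sum_q.
  rewrite (decomp_sum _ (m + 1)) by lia.
  replace (Init.Nat.pred (m + 1)) with (m + 0)%nat by lia.
  rewrite (sum_q m p (fun k => h (S k))). ring.
Qed.

Lemma SL p m g t : It p m g t = sum_f_R0 (fun k => binom_pmf m p k * g (t + INR k)) m.
Proof.
  revert t. induction m; intro t.
  - simpl. unfold binom_pmf. rewrite C_n0. simpl. rewrite Rplus_0_r. ring.
  - rewrite It_S. unfold Op. rewrite !IHm.
    rewrite (PS m p (fun k => g (t + INR k))).
    f_equal. f_equal. apply sum_eq. intros i _. rewrite S_INR. f_equal. f_equal. ring.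
Qed.

Lemma conv_D2 f : convex_fun f -> forall s, 0 <= D2 f s.
Proof.
  intros Hf s. unfold D2.
  pose proof (Hf s (s + 1 + 1) (1/2) ltac:(lra)) as H.
  replace (1 / 2 * s + (1 - 1 / 2) * (s + 1 + 1)) with (s + 1) in H by field. lra.
Qed.

Lemma E_binom_It m p f : E_binom m p f = It p m f 0.
Proof.
  rewrite SL. unfold E_binom. apply sum_eq. intros i _. now rewrite Rplus_0_l.
Qed.

Lemma E_sum_It n p f : E_sum_indep_binom n p f = It p (2 * n) f 0.
Proof.
  replace (2 * n)%nat with (n + n)%nat by lia.
  unfold It. rewrite Nat.iter_add. fold (It p n f). fold (It p n (It p n f)).
  rewrite (SL p n (It p n f)). unfold E_sum_indep_binom. apply sum_eq. intros i _.
  rewrite SL, scal_sum. apply sum_eq. intros j _. rewrite Rplus_0_l. ring.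
Qed.

Theorem proposition2 (x y : R) (n : nat)
  (hx : 0 < x < 1) (hy : 0 < y < 1) :
  forall f : R -> R, convex_fun f ->
    E_binom (2 * n) ((x + y) / 2) f <=
      / 2 * (E_sum_indep_binom n x f + E_sum_indep_binom n y f).
Proof.
  intros f Hf. rewrite E_binom_It, !E_sum_It.
  apply Mlem; [lra|lra|]. apply conv_D2, Hf.
Qed.
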